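(* Let $Q_S=(X_0,Y_0,G,\mathcal{S})$ be a surrogate outcome query with graph $G=(V,E)$ and let $Q_T$ be its query transformation with collection of transportability diagrams $\mathcal{D}$; let $T$ be the set of all transportability nodes. If $X,Y\subseteq V$ are sets containing no transportability nodes and $(Y\perp X\mid Z)_{D_i}$ holds in some $D_i\in\mathcal{D}$, then $(Y\perp X\mid Z\setminus T)_G$ holds. Conversely, every conditional independence (d-separation) statement that holds in $G$ holds in every diagram of $\mathcal{D}$.
   Context: A (semi-Markovian) graph $G=(V,E)$ has acyclic directed edges and bidirected edges. d-separation $(Y\perp X\mid Z)$: every path between $X$ and $Y$ contains a non-collider in $Z$ or a collider $M$ (both adjacent path edges have arrowheads into $M$) with $\mathrm{De}(M)\cap Z=\emptyset$, where $\mathrm{De}(M)$ includes $M$. $\mathrm{An},\mathrm{De}$ include the set itself; $G[\overline{Z}]$ removes edges into $Z$; c-components are maximal sets connected by bidirected paths. Surrogate outcome query: $(X_0,Y_0,G,\mathcal{S})$ with $X_0,Y_0\subset V$ disjoint and $\mathcal{S}=\{(Z_i,W_i)\}_{i=1}^n$ satisfying $W_i\subset\mathrm{De}(Z_i)_G\setminus Z_i$, $Z_i\subset\mathrm{An}(W_i)_G\setminus W_i$, $\mathrm{De}(W_i)_G\cap Z_i=\emptyset$, $\mathrm{An}(W_{ij})_G\setminus W_i=\mathrm{An}(W_i)_G\setminus W_i$ for each $W_{ij}\in W_i$. Its query transformation has diagrams $D^{(1)},\dots,D^{(n)}$, where $D^{(i)}$ is $G$ plus a new node $T^{(i)}_j$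 with a single edge $T^{(i)}_j\to V_j$ for each $V_j\in(\mathrm{De}(Z_i)_G\setminus W_i)\cup(C_{W_i}\setminus\mathrm{An}(W_i)_{G[\overline{Z_i}]})$, $C_{W_i}$ being the union of vertex sets of c-components of $G$ meeting $W_i$. *)

(* Defs.v *)
From HB Require Import structures.
From mathcomp Require Import all_boot.
Set Implicit Arguments. Unset Strict Implicit. Unset Printing Implicit Defensive.

(* A graph on a finite vertex type U: directed edges [dir x y] (x -> y) and
   bidirected edges [bi x y] (x <-> y; read symmetrically). *)
Record graph (U : finType) := Graph { dir : rel U; bi : rel U }.

Section Graphs.
Variable U : finType.
Implicit Types (g : graph U) (A Z : {set U}).

Definition acyclic g := forall x y, dir g x y -> ~~ connect (dir g) y x.

(* descendants / ancestors, including the set itself *)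
Definition De g A : {set U} := [set v | [exists a in A, connect (dir g) a v]].
Definition An g A : {set U} := [set v | [exists a in A, connect (dir g) v a]].

(* G[\overline{Z}] : remove all edges with an arrowhead into Z *)
Definition cut_in g Z : graph U :=
  Graph (fun x y => dir g x y && (y \notin Z))
        (fun x y => [&& bi g x y, x \notin Z & y \notin Z]).

Definition ccomp_union g A : {set U} :=
  [set v | [exists a in A, connect (fun x y => bi g x y || bi g y x) a v]].

(* Edges along a path: Fwd = a -> b, Bwd = a <- b, Bid = a <-> b *)
Inductive ek := Fwd | Bwd | Bid.

Definition step_ok g (a : U) (k : ek) (b : U) :=
  match k with
  | Fwd => dir g a b
  | Bwd => dir g b a
  | Bid => bi g a b || bi g b a
  end.

Fixpoint valid_steps g (x : U) (s : seq (ek * U)) : bool :=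
  match s with
  | [::] => true
  | (k, y) :: s' => step_ok g x k y && valid_steps g y s'
  end.

Definition is_path g (x : U) (s : seq (ek * U)) :=
  valid_steps g x s && uniq (x :: map snd s).

(* m is a collider when the incoming edge k1 and outgoing edge k2 both have
   an arrowhead at m *)
Definition collider (k1 k2 : ek) :=
  (match k1 with Fwd | Bid => true | Bwd => false end) &&
  (match k2 with Bwd | Bid => true | Fwd => false end).

Definition blocked g Z (s : seq (ek * U)) :=
  exists (s1 s2 : seq (ek * U)) (k1 k2 : ek) (m y : U),
    s = s1 ++ (k1, m) :: (k2, y) :: s2 /\
    (if collider k1 k2 then De g [set m] :&: Z = set0 else m \in Z).

Definition dsep g (Y X Z : {set U}) :=
  forall (x : U) (s : seq (ek * U)),
    is_path g x s -> x \in X -> last x (map snd s) \in Y -> blocked g Z s.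

End Graphs.

Section Surrogate.
Variables (V : finType) (G : graph V).

Definition surrogate_pair (p : {set V} * {set V}) :=
  let: (Z, W) := p in
  [/\ W \subset De G Z :\: Z,
      Z \subset An G W :\: W,
      De G W :&: Z = set0 &
      forall w, w \in W -> An G [set w] :\: W = An G W :\: W].

Definition surrogate_query (X0 Y0 : {set V}) (S : seq ({set V} * {set V})) :=
  [disjoint X0 & Y0] /\ forall p, p \in S -> surrogate_pair p.

(* vertices V_j receiving a transportability node T_j in D^(i) *)
Definition tset (p : {set V} * {set V}) : {set V} :=
  let: (Z, W) := p in
  (De G Z :\: W) :|: (ccomp_union G W :\: An (cut_in G Z) W).

(* vertex type of D^(i): original vertices (inl) plus one transportability
   node (inr) for each vertex of tset p *)
Definition dvertex (p : {set V} * {set V}) : finType :=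
  (V + {v : V | v \in tset p})%type.

Definition diagram (p : {set V} * {set V}) : graph (dvertex p) :=
  Graph (fun a b : dvertex p => match a, b with
           | inl x, inl y => dir G x y
           | inr t, inl y => val t == y
           | _, _ => false end)
        (fun a b : dvertex p => match a, b with
           | inl x, inl y => bi G x y
           | _, _ => false end).

Definition emb (p : {set V} * {set V}) (A : {set V}) : {set dvertex p} :=
  [set (@inl V {v : V | v \in tset p} x : dvertex p) | x in A].

(* Z \ T, viewed as a subset of V *)
Definition untrans (p : {set V} * {set V}) (Z : {set dvertex p}) : {set V} :=
  [set v | (inl v : dvertex p) \in Z].

End Surrogate.

(* Main.v *)
Require Import Defs.
From mathcomp Require Import all_boot.
Set Implicit Arguments. Unset Strict Implicit. Unset Printing Implicit Defensive.

Section Aux.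
Variables (V : finType) (G : graph V) (p : {set V} * {set V}).
Local Notation D := (diagram G p).
Local Notation W := (dvertex G p).

Definition lift (e : ek * V) : ek * W := (e.1, inl e.2).
Definition unl (w : W) : V := match w with inl x => x | inr t => val t end.
Definition unlift (e : ek * W) : ek * V := (e.1, unl e.2).

Lemma unliftK s : map unlift (map lift s) = s.
Proof. by elim: s => [|[k y] s IH] //=; rewrite IH. Qed.

Lemma valid_lift x s : valid_steps D (inl x) (map lift s) = valid_steps G x s.
Proof. by elim: s x => [|[k y] s IH] x //=; rewrite IH; case: k. Qed.

Lemma inl_inj : injective (fun x : V => (inl x : W)).
Proof. by move=> a b [->]. Qed.

Lemma uniq_lift x s : uniq ((inl x : W) :: map snd (map lift s)) = uniq (x :: map snd s).
Proof.
have -> : ((inl x : W) :: map snd (map lift s)) = map (fun x : V => (inl x : W)) (x :: map snd s).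
  by rewrite /= -!map_comp.
by rewrite (map_inj_uniq inl_inj).
Qed.

Lemma last_lift x s : last (inl x : W) (map snd (map lift s)) = inl (last x (map snd s)).
Proof. by elim: s x => [|[k y] s IH] x //=. Qed.

Lemma De1 (U : finType) (g : graph U) m v : (v \in De g [set m]) = connect (dir g) m v.
Proof.
rewrite inE; apply/existsP/idP => [[a /andP[/set1P -> //]]|c].
by exists m; rewrite set11 c.
Qed.

Lemma conn_lift a v : connect (dir G) a v -> connect (dir D) (inl a) (inl v).
Proof.
move/connectP=> [q pq ->]; apply/connectP; exists (map (fun x : V => (inl x : W)) q).
  by elim: q a pq => //= b q IH a /andP[ab pq]; rewrite ab IH.
by rewrite (last_map (fun x : V => (inl x : W))).
Qed.

Lemma conn_unlift a w : connect (dir D) (inl a) w -> exists2 v, w = inl v & connect (dir G) a v.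
Proof.
move/connectP=> [q pq ->]; elim: q a pq => [|b q IH] a /=.
  by move=> _; exists a.
case: b => [b|t] /=.
  move/andP=> [ab pq]; have [v -> c] := IH _ pq.
  by exists v => //; apply: connect_trans (connect1 ab) c.
by [].
Qed.

Lemma L1 m (Z : {set W}) : De D [set inl m] :&: Z = set0 -> De G [set m] :&: untrans Z = set0.
Proof.
move=> H; apply/setP => v; rewrite in_setI in_set0; apply/negbTE/negP => /andP[Hv Hz].
move/setP: H => /(_ (inl v)); rewrite in_setI in_set0 De1 conn_lift; last by rewrite -De1.
by rewrite inE in Hz; rewrite Hz.
Qed.

Lemma L2 m (Z : {set V}) : De G [set m] :&: Z = set0 -> De D [set inl m] :&: emb G p Z = set0.
Proof.
move=> H; apply/setP => w; rewrite in_setI in_set0; apply/negbTE/negP => /andP[Hw Hz].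
rewrite De1 in Hw; have [v Ev c] := conn_unlift Hw; subst w.
case/imsetP: Hz => v' Hv' /inl_inj Ev; subst v'.
move/setP: H => /(_ v); rewrite in_setI in_set0 De1 c Hv'.
by [].
Qed.

Lemma all_inl x s : valid_steps D (inl x) s -> uniq ((inl x : W) :: map snd s) ->
  (exists y, last (inl x : W) (map snd s) = inl y) -> exists s', s = map lift s'.
Proof.
elim: s x => [|[k b] s IH] x; first by exists [::].
case: b => [y|t] /=.
  move/andP=> [_ vs] /andP [_ u] l; have [s' ->] := IH y vs u l.
  by exists ((k, y) :: s').
move/andP=> [st vs] /andP [nx u] [w l].
case: k st => //= /eqP ex.
case: s vs u nx l IH => [|[k2 c] s] /=; first by [].
case: k2 => //=; case: c => [c|c] //=.
move/andP=> [/eqP ec _] _; rewrite -ec ex !inE eqxx orbT.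
by [].
Qed.

End Aux.

Theorem corollary1 (V : finType) (G : graph V) (X0 Y0 : {set V})
    (S : seq ({set V} * {set V})) :
  acyclic G -> surrogate_query G X0 Y0 S ->
  (forall (i : nat), i < size S ->
     forall (X Y : {set V}) (Z : {set dvertex G (nth (set0, set0) S i)}),
       dsep (diagram G (nth (set0, set0) S i))
            (emb G (nth (set0, set0) S i) Y) (emb G (nth (set0, set0) S i) X) Z ->
       dsep G Y X (untrans Z)) /\
  (forall X Y Z : {set V}, dsep G Y X Z ->
     forall (i : nat), i < size S ->
       dsep (diagram G (nth (set0, set0) S i))
            (emb G (nth (set0, set0) S i) Y) (emb G (nth (set0, set0) S i) X)
            (emb G (nth (set0, set0) S i) Z)).
Proof.
move=> _ _; split.
  move=> i _; move: (nth _ S i) => p X Y Z H x s ps xX ly.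
  have := H (inl x) (map (@lift V G p) s).
  rewrite /is_path valid_lift uniq_lift last_lift.
  case/(_ ps (imset_f _ xX) (imset_f _ ly)) => [s1 [s2 [k1 [k2 [m [y [E C]]]]]]].
  have Hm : m \in map snd (map (@lift V G p) s).
    by rewrite E map_cat mem_cat /= inE eqxx orbT.
  have EE : map snd (map (@lift V G p) s) = map (fun x : V => (inl x : dvertex G p)) (map snd s).
    by rewrite -!map_comp.
  rewrite EE in Hm.
  have [m' _ Em] := mapP Hm.
  rewrite /= in Em; subst m.
  exists (map (@unlift V G p) s1), (map (@unlift V G p) s2), k1, k2, m', (unl y); split.
    by rewrite -[s](unliftK G p) E map_cat.
  by case: (collider k1 k2) C => [/L1|] //; rewrite inE.
move=> X Y Z H i _; move: (nth _ S i) => p w s /andP[ps pu] wX ly.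
case/imsetP: wX => x xX Ew; subst w.
case/imsetP: ly => y yY Ey.
have [s' Es] := all_inl ps pu (ex_intro _ y Ey); subst s.
rewrite last_lift in Ey; case: Ey => Ey.
have := H x s'; rewrite /is_path -(valid_lift G p) -(uniq_lift G p) ps pu Ey.
case/(_ isT xX yY) => [s1 [s2 [k1 [k2 [m [y' [E C]]]]]]].
exists (map (@lift V G p) s1), (map (@lift V G p) s2), k1, k2, (inl m), (inl y'); split.
  by rewrite E map_cat.
by case: (collider k1 k2) C => [/L2|/(imset_f (fun x : V => (inl x : dvertex G p)))].
Qed.
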